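(* Let $n\ge 3$ and let $\preceq$ be an admissible partial order on $\Lambda$. Let $\mathbf{T}(\preceq)$ be the set of all tilings $T$ such that for every 4-element subset $F\subseteq[n]$, the set $T\cap\mathrm{stick}(F)$ is an initial segment of $\mathrm{stick}(F)$ if $\preceq$ orders the stick of $F$ lexicographically, and a final segment of $\mathrm{stick}(F)$ if $\preceq$ orders it anti-lexicographically. Then $\mathbf{T}(\preceq)$ is a Condorcet super-domain which is maximal by inclusion: for every tiling $T\notin\mathbf{T}(\preceq)$, the set $\mathbf{T}(\preceq)\cup\{T\}$ is not a Condorcet super-domain.
   Context: Fix an integer $n\ge 3$ and write $[n]=\{1,\dots,n\}$. Let $\Lambda$ be the set of 3-element subsets of $[n]$; a triple $\{i,j,k\}$ with $i<j<k$ is written $ijk$. For a 4-element subset $F=\{i<j<k<l\}$ of $[n]$, the stick of $F$, $\mathrm{stick}(F)$, is the sequence $(ijk,\ ijl,\ ikl,\ jkl)$ (the lexicographic order on these four triples); the reverse sequence is the anti-lexicographic order. A tiling (the inversion set of a rhombus tiling of the zonogon $Z(n;2)$) is a subset $T\subseteq\Lambda$ such that for every 4-element $F\subseteq[n]$, $T\cap\mathrm{stick}(F)$ is an initial segment or a final segment of $\mathrm{stick}(F)$ (empty set and whole stick allowed). Let $\mathbf T$ be the set of tilings. For a finite set $V$ of odd cardinality and tilings $(T_v)_{v\in V}$, $sm((T_v)_{v\in V})$ is the set of triples lying in $T_v$ for more than $|V|/2$ indices $v$. A subset $\mathbf D\subseteq\mathbf T$ is a Condorcet super-domain if for every finite $V$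 of odd cardinality and every family $(T_v)_{v\in V}$ with all $T_v\in\mathbf D$, $sm((T_v)_{v\in V})$ is a tiling. A partial order $\preceq$ on $\Lambda$ is admissible if for every 4-element $F\subseteq[n]$ its restriction to the four triples of $\mathrm{stick}(F)$ is the lexicographic linear order or the anti-lexicographic linear order. *)

(* Defs.v *)
(* [n] = {1..n} is modelled by 'I_n = {0..n-1} (order-preserving shift). *)
From mathcomp Require Import all_boot all_order.
Set Implicit Arguments. Unset Strict Implicit. Unset Printing Implicit Defensive.

Section Tilings.
Variable n : nat.

Definition is_triple (t : {set 'I_n}) : bool := #|t| == 3.

(* stick F = (F\{l}, F\{k}, F\{j}, F\{i}) for F = {i<j<k<l}, i.e. (ijk, ijl, ikl, jkl) *)
Definition ord_le (x y : 'I_n) : bool := (x <= y)%N.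
Definition stick (F : {set 'I_n}) : seq {set 'I_n} :=
  [seq F :\ x | x <- rev (sort ord_le (enum F))].

Definition stick_at (F : {set 'I_n}) (i : nat) : {set 'I_n} := nth set0 (stick F) i.

Definition initial_seg (T : {set {set 'I_n}}) (F : {set 'I_n}) : Prop :=
  exists m, (m <= 4)%N /\ forall i, (i < 4)%N -> (stick_at F i \in T) = (i < m)%N.
Definition final_seg (T : {set {set 'I_n}}) (F : {set 'I_n}) : Prop :=
  exists m, (m <= 4)%N /\ forall i, (i < 4)%N -> (stick_at F i \in T) = (m <= i)%N.

Definition tiling (T : {set {set 'I_n}}) : Prop :=
  (forall t, t \in T -> is_triple t) /\
  forall F : {set 'I_n}, #|F| = 4 -> initial_seg T F \/ final_seg T F.

Definition sm (V : finType) (f : V -> {set {set 'I_n}}) : {set {set 'I_n}} :=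
  [set t | is_triple t & (#|V| < 2 * #|[set v | t \in f v]|)%N].

Definition condorcet_super_domain (D : {set {set 'I_n}} -> Prop) : Prop :=
  (forall T, D T -> tiling T) /\
  forall (V : finType) (f : V -> {set {set 'I_n}}),
    odd #|V| -> (forall v, D (f v)) -> tiling (sm f).

Definition partial_order_on_Lambda (r : rel {set 'I_n}) : Prop :=
  (forall a, is_triple a -> r a a) /\
  (forall a b, is_triple a -> is_triple b -> r a b -> r b a -> a = b) /\
  (forall a b c, is_triple a -> is_triple b -> is_triple c -> r a b -> r b c -> r a c).

Definition lex_on_stick (r : rel {set 'I_n}) (F : {set 'I_n}) : Prop :=
  forall i j, (i < 4)%N -> (j < 4)%N -> r (stick_at F i) (stick_at F j) = (i <= j)%N.
Definition antilex_on_stick (r : rel {set 'I_n}) (F : {set 'I_n}) : Prop :=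
  forall i j, (i < 4)%N -> (j < 4)%N -> r (stick_at F i) (stick_at F j) = (j <= i)%N.

Definition admissible (r : rel {set 'I_n}) : Prop :=
  partial_order_on_Lambda r /\
  forall F : {set 'I_n}, #|F| = 4 -> lex_on_stick r F \/ antilex_on_stick r F.

Definition T_of (r : rel {set 'I_n}) (T : {set {set 'I_n}}) : Prop :=
  tiling T /\
  forall F : {set 'I_n}, #|F| = 4 ->
    (lex_on_stick r F -> initial_seg T F) /\ (antilex_on_stick r F -> final_seg T F).

End Tilings.

(* Main.v *)
Require Import Defs.
From mathcomp Require Import all_boot all_order.
From mathcomp Require Import zify.
From Stdlib Require Import Classical.


Lemma mono_init (P : nat -> bool) :
  (forall i j, (i <= j)%N -> (j < 4)%N -> P j -> P i) ->
  exists m, (m <= 4)%N /\ forall i, (i < 4)%N -> P i = (i < m)%N.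
Proof.
move=> H.
have h01 := H 0 1 isT isT. have h12 := H 1 2 isT isT. have h23 := H 2 3 isT isT.
case E0: (P 0); case E1: (P 1); case E2: (P 2); case E3: (P 3);
  rewrite ?E0 ?E1 ?E2 ?E3 in h01 h12 h23;
  try (by have := h01 isT); try (by have := h12 isT); try (by have := h23 isT).
- by exists 4; split => //; case=> [|[|[|[|i]]]].
- by exists 3; split => //; case=> [|[|[|[|i]]]].
- by exists 2; split => //; case=> [|[|[|[|i]]]].
- by exists 1; split => //; case=> [|[|[|[|i]]]].
- by exists 0; split => //; case=> [|[|[|[|i]]]].
Qed.

Lemma mono_final (P : nat -> bool) :
  (forall i j, (i <= j)%N -> (j < 4)%N -> P i -> P j) ->
  exists m, (m <= 4)%N /\ forall i, (i < 4)%N -> P i = (m <= i)%N.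
Proof.
move=> H.
have h01 := H 0 1 isT isT. have h12 := H 1 2 isT isT. have h23 := H 2 3 isT isT.
case E0: (P 0); case E1: (P 1); case E2: (P 2); case E3: (P 3);
  rewrite ?E0 ?E1 ?E2 ?E3 in h01 h12 h23;
  try (by have := h01 isT); try (by have := h12 isT); try (by have := h23 isT).
- by exists 0; split => //; case=> [|[|[|[|i]]]].
- by exists 1; split => //; case=> [|[|[|[|i]]]].
- by exists 2; split => //; case=> [|[|[|[|i]]]].
- by exists 3; split => //; case=> [|[|[|[|i]]]].
- by exists 4; split => //; case=> [|[|[|[|i]]]].
Qed.

Lemma stick_triple n (F : {set 'I_n}) i :
  #|F| = 4 -> (i < 4)%N -> is_triple (stick_at F i).
Proof.
move=> hF hi.
have hall : all (@is_triple n) (stick F).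
  rewrite /stick all_map; apply/allP => x; rewrite mem_rev mem_sort mem_enum => xF /=.
  rewrite /is_triple (cardsD1 x F) xF in hF. by rewrite /is_triple; move: hF; rewrite /= add1n => -[->].
have hs : size (stick F) = 4 by rewrite /stick size_map size_rev size_sort -cardE.
by move/all_nthP: hall => /(_ set0 i); rewrite hs => /(_ hi).
Qed.

Lemma c3 (T : finType) (s : T) (X A B : {set T}) :
  #|[set v : 'I_3 | s \in nth X [:: X; A; B] v]| = ((s \in X) + (s \in A) + (s \in B))%N.
Proof.
rewrite -sum1_card big_mkcond /= !big_ord_recl big_ord0 /=.
rewrite !inE /=. by case: (s \in X); case: (s \in A); case: (s \in B).
Qed.

Lemma downset_T_of n (r : rel {set 'I_n}) (X : {set {set 'I_n}}) :
  admissible r -> (forall t, t \in X -> is_triple t) ->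
  (forall a b, is_triple a -> is_triple b -> r a b -> b \in X -> a \in X) -> T_of r X.
Proof.
move=> [_ hadm] htr hdown.
have H1 : forall F : {set 'I_n}, #|F| = 4 -> lex_on_stick r F -> initial_seg X F.
  move=> F hF hl; apply: mono_init => i j hij hj.
  have hi : (i < 4)%N by apply: leq_ltn_trans hij hj.
  apply: hdown; try apply: stick_triple => //.
  by rewrite hl.
have H2 : forall F : {set 'I_n}, #|F| = 4 -> antilex_on_stick r F -> final_seg X F.
  move=> F hF hl; apply: mono_final => i j hij hj.
  have hi : (i < 4)%N by apply: leq_ltn_trans hij hj.
  apply: hdown; try apply: stick_triple => //.
  by rewrite hl.
split.
  split => // F hF; case: (hadm F hF) => h; [left; exact: H1 | right; exact: H2].
by move=> F hF; split; [exact: H1 | exact: H2].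
Qed.

Lemma part1 n (r : rel {set 'I_n}) : admissible r -> condorcet_super_domain (T_of r).
Proof.
move=> [_ hadm]; split; first by move=> T [].
move=> V f _ hf; split.
  by move=> t; rewrite inE => /andP[].
move=> F hF; case: (hadm F hF) => h; [left; apply: mono_init | right; apply: mono_final].
- move=> i j hij hj.
  have hi : (i < 4)%N by apply: leq_ltn_trans hij hj.
  rewrite !inE => /andP[_ hc]; rewrite stick_triple //=.
  apply: (leq_trans hc); rewrite leq_mul2l /=; apply: subset_leq_card; apply/subsetP => v; rewrite !inE.
  have [m [_ hm]] := ((hf v).2 F hF).1 h.
  rewrite (hm j) // (hm i) // => ?; lia.
- move=> i j hij hj.
  have hi : (i < 4)%N by apply: leq_ltn_trans hij hj.
  rewrite !inE => /andP[_ hc]; rewrite stick_triple //=.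
  apply: (leq_trans hc); rewrite leq_mul2l /=; apply: subset_leq_card; apply/subsetP => v; rewrite !inE.
  have [m [_ hm]] := ((hf v).2 F hF).2 h.
  rewrite (hm j) // (hm i) // => ?; lia.
Qed.

Lemma finish n (F : {set 'I_n}) (T A B : {set {set 'I_n}}) i :
  #|F| = 4 -> (i < 4)%N ->
  (stick_at F i \in sm (fun v : 'I_3 => nth T [:: T; A; B] v)) =
  (2 <= (stick_at F i \in T) + (stick_at F i \in A) + (stick_at F i \in B))%N.
Proof.
move=> hF hi; rewrite inE stick_triple //= c3 card_ord.
move: (_ + _ + _)%N => k; by apply/idP/idP => ?; lia.
Qed.

Lemma notseg n (X : {set {set 'I_n}}) F (p : nat -> bool) i1 j1 i2 j2 :
  (forall i, (i < 4)%N -> (stick_at F i \in X) = p i) ->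
  (i1 < j1)%N -> (j1 < 4)%N -> ~~ p i1 -> p j1 ->
  (i2 < j2)%N -> (j2 < 4)%N -> p i2 -> ~~ p j2 ->
  ~ initial_seg X F /\ ~ final_seg X F.
Proof.
move=> hp h1 h2 h3 h4 h5 h6 h7 h8.
have hi1 : (i1 < 4)%N by lia. have hi2 : (i2 < 4)%N by lia.
split => -[m [_ hm]].
- move: h3 h4; rewrite -!hp // !hm //; lia.
- move: h7 h8; rewrite -!hp // !hm //; lia.
Qed.

Lemma ideal_T_of n (r : rel {set 'I_n}) (s : {set 'I_n}) :
  admissible r -> is_triple s -> T_of r [set t | is_triple t && r t s].
Proof.
move=> hadm hs; apply: downset_T_of => //.
  by move=> t; rewrite inE => /andP[].
move=> a b ha hb hab; rewrite !inE => /andP[_ hbs]; rewrite ha /=.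
by case: hadm => -[_ [_ htr]] _; apply: (htr a b s).
Qed.

Lemma set0_T_of n (r : rel {set 'I_n}) : admissible r -> T_of r set0.
Proof.
move=> hadm; apply: downset_T_of => //; first by move=> t; rewrite inE.
by move=> a b _ _ _; rewrite inE.
Qed.

Theorem theorem2 (n : nat) (r : rel {set 'I_n}) :
  (3 <= n)%N -> admissible r ->
  condorcet_super_domain (T_of r) /\
  (forall T : {set {set 'I_n}}, tiling T -> ~ T_of r T ->
     ~ condorcet_super_domain (fun X => T_of r X \/ X = T)).
Proof.
move=> hn hadm; split; first exact: part1.
move=> T hT hnot [_ hcsd].
have [F hFall] : exists F : {set 'I_n}, ~ (#|F| = 4 ->
    (lex_on_stick r F -> initial_seg T F) /\ (antilex_on_stick r F -> final_seg T F)).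
  apply: not_all_ex_not => hall; apply: hnot; split => //.
have hF : #|F| = 4 by apply: NNPP => hF; apply: hFall => h; contradiction.
have hlexanti : lex_on_stick r F -> antilex_on_stick r F -> False.
  by move=> h1 h2; move: (h1 0 1 isT isT); rewrite h2.
pose I k := [set t | is_triple t && r t (stick_at F k)].
have hI : forall k, (k < 4)%N -> T_of r (I k).
  by move=> k hk; apply: ideal_T_of => //; apply: stick_triple.
have hI0 : T_of r set0 by exact: set0_T_of.
have use : forall A B, T_of r A -> T_of r B ->
    ~ initial_seg (sm (fun v : 'I_3 => nth T [:: T; A; B] v)) F /\
    ~ final_seg (sm (fun v : 'I_3 => nth T [:: T; A; B] v)) F -> False.
  move=> A B hA hB [hni hnf].
  have hD : forall v : 'I_3, T_of r (nth T [:: T; A; B] v) \/ nth T [:: T; A; B] v = T.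
    by case=> [[|[|[|//]]] ?] /=; [right | left | left].
  have hodd : odd #|'I_3| by rewrite card_ord.
  have [_ /(_ F hF)] := hcsd 'I_3 (fun v : 'I_3 => nth T [:: T; A; B] v) hodd hD.
  by case.
case: (proj2 hadm F hF) => h.
- have hni : ~ initial_seg T F.
    by move=> hi; apply: hFall => _; split => // /(hlexanti h).
  have hIm : forall k i, (k < 4)%N -> (i < 4)%N -> (stick_at F i \in I k) = (i <= k)%N.
    by move=> k i hk hi; rewrite inE stick_triple //= h.
  have [|[m [hm4 hm]]] := hT.2 F hF; first by [].
  have hm0 : m <> 0.
    move=> e; apply: hni; exists 4; split => // i hi; rewrite hm // e; lia.
  have hm4' : m <> 4.
    move=> e; apply: hni; exists 0; split => // i hi; rewrite hm // e; lia.
  case: m hm4 hm hm0 hm4' => [|[|[|[|[|m]]]]] // _ hm _ _.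
  + apply: (use set0 (I 2)) => //; first exact: hI.
    apply: (@notseg _ _ _ (fun i => (2 <= (1 <= i) + false + (i <= 2))%N) 0 1 2 3) => //.
    by move=> i hi; rewrite finish // hm // inE hIm.
  + apply: (use set0 (I 2)) => //; first exact: hI.
    apply: (@notseg _ _ _ (fun i => (2 <= (2 <= i) + false + (i <= 2))%N) 0 2 2 3) => //.
    by move=> i hi; rewrite finish // hm // inE hIm.
  + apply: (use (I 0) (I 3)) => //; try exact: hI.
    apply: (@notseg _ _ _ (fun i => (2 <= (3 <= i) + (i <= 0) + (i <= 3))%N) 1 3 0 1) => //.
    by move=> i hi; rewrite finish // hm // !hIm.
- have hnf : ~ final_seg T F.
    by move=> hf; apply: hFall => _; split => // /hlexanti.
  have hIm : forall k i, (k < 4)%N -> (i < 4)%N -> (stick_at F i \in I k) = (k <= i)%N.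
    by move=> k i hk hi; rewrite inE stick_triple //= h.
  have [[m [hm4 hm]]|] := hT.2 F hF; last by [].
  have hm0 : m <> 0.
    move=> e; apply: hnf; exists 4; split => // i hi; rewrite hm // e; lia.
  have hm4' : m <> 4.
    move=> e; apply: hnf; exists 0; split => // i hi; rewrite hm // e; lia.
  case: m hm4 hm hm0 hm4' => [|[|[|[|[|m]]]]] // _ hm _ _.
  + apply: (use (I 3) (I 0)) => //; try exact: hI.
    apply: (@notseg _ _ _ (fun i => (2 <= (i < 1) + (3 <= i) + (0 <= i))%N) 1 3 0 1) => //.
    by move=> i hi; rewrite finish // hm // !hIm.
  + apply: (use set0 (I 1)) => //; first exact: hI.
    apply: (@notseg _ _ _ (fun i => (2 <= (i < 2) + false + (1 <= i))%N) 0 1 1 2) => //.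
    by move=> i hi; rewrite finish // hm // inE hIm.
  + apply: (use set0 (I 1)) => //; first exact: hI.
    apply: (@notseg _ _ _ (fun i => (2 <= (i < 3) + false + (1 <= i))%N) 0 1 2 3) => //.
    by move=> i hi; rewrite finish // hm // inE hIm.
Qed.
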